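(* In the standing setting described in the context, let $(\phi,\beta),(\psi,\alpha)\in\mathcal{A}\times\mathcal{B}$. Then $(G,\circ_{\phi,\beta})$ and $(G,\circ_{\psi,\alpha})$ are groups (with identity $1$; the inverse of $g$ in $(G,\circ_{\phi,\beta})$ is $\phi^{\uparrow}(g)^{-1}\, g^{-1}\,\phi^{\uparrow}(g)\,\beta(g,g)$ for any lifting $\phi^\uparrow$ of $\phi$), and $(G,\circ_{\phi,\beta},\circ_{\psi,\alpha})$ is a bi-skew brace. In other words, the family of operations $(\circ_{\phi,\beta} : (\phi,\beta)\in\mathcal{A}\times\mathcal{B})$ is a brace block on $G$.
   Context: Standing setting: $(G,\cdot)$ is a group, $K$ is a subgroup of $G$ contained in the centre $Z(G)$, and $A$ is a subgroup with $K\le A\le G$ and $A/K$ abelian. Let $\mathcal{A}=\{\psi\in\operatorname{End}(G/K):\psi(G/K)\le A/K\}$; it is a ring with $(\psi+\phi)(x)=\psi(x)\phi(x)$, $(-\psi)(x)=\psi(x)^{-1}$ and $(\psi\phi)(x)=\psi(\phi(x))$. A lifting of $\psi\in\mathcal{A}$ is any set map $\psi^{\uparrow}:G\to A$ with $\psi^{\uparrow}(g)K=\psi(gK)$ for all $g\in G$ (liftings need not be unique nor homomorphisms). Let $\mathcal{B}$ be the set of maps $\alpha:G\times G\to K$ that are bilinear, i.e. $\alpha(gh,k)=\alpha(g,k)\alpha(h,k)$ and $\alpha(g,hk)=\alpha(g,h)\alpha(g,k)$ for all $g,h,k\in G$, and satisfy $\alpha(k,g)=\alpha(g,k)=1$ for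 all $k\in K$, $g\in G$. For $(\psi,\alpha)\in\mathcal{A}\times\mathcal{B}$ define $g\circ_{\psi,\alpha}h=g\cdot\psi^{\uparrow}(g)\cdot h\cdot\psi^{\uparrow}(g)^{-1}\cdot\alpha(g,h)$, where $\psi^\uparrow$ is a lifting of $\psi$ (this does not depend on the choice of lifting). A skew brace is a triple $(G,\cdot,\circ)$ where $(G,\cdot)$ and $(G,\circ)$ are groups and $g\circ(h\cdot k)=(g\circ h)\cdot g^{-1}\cdot(g\circ k)$ for all $g,h,k$ ($g^{-1}$ the inverse for $\cdot$). A bi-skew brace is a triple $(G,\cdot,\circ)$ such that both $(G,\cdot,\circ)$ and $(G,\circ,\cdot)$ are skew braces. A brace block on a set $G$ is a family $\mathcal{F}$ of group operations on $G$ such that $(G,\circ,\diamond)$ is a bi-skew brace for all $\circ,\diamond\in\mathcal{F}$. *)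

(* Defs.v *)
Set Implicit Arguments.

Section Defs.
Variable T : Type.

Definition is_group_with (mul : T -> T -> T) (one : T) (inv : T -> T) : Prop :=
  (forall x y z, mul x (mul y z) = mul (mul x y) z) /\
  (forall x, mul one x = x /\ mul x one = x) /\
  (forall x, mul x (inv x) = one /\ mul (inv x) x = one).

Definition is_unit (mul : T -> T -> T) (e : T) : Prop :=
  forall x, mul e x = x /\ mul x e = x.

Definition is_group (mul : T -> T -> T) : Prop :=
  (forall x y z, mul x (mul y z) = mul (mul x y) z) /\
  exists e, is_unit mul e /\ forall x, exists y, mul x y = e /\ mul y x = e.

Definition skew_brace (mul1 mul2 : T -> T -> T) : Prop :=
  is_group mul1 /\ is_group mul2 /\
  forall e g x h k, is_unit mul1 e -> mul1 g x = e -> mul1 x g = e ->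
    mul2 g (mul1 h k) = mul1 (mul1 (mul2 g h) x) (mul2 g k).

Definition bi_skew_brace (mul1 mul2 : T -> T -> T) : Prop :=
  skew_brace mul1 mul2 /\ skew_brace mul2 mul1.

Definition brace_block (I : Type) (F : I -> T -> T -> T) : Prop :=
  forall i j, bi_skew_brace (F i) (F j).

Variables (mul : T -> T -> T) (one : T) (inv : T -> T).

Definition is_subgroup (H : T -> Prop) : Prop :=
  H one /\ (forall x y, H x -> H y -> H (mul x y)) /\ (forall x, H x -> H (inv x)).

Definition central (K : T -> Prop) : Prop :=
  forall k g, K k -> mul k g = mul g k.

(* A/K abelian: commutators of elements of A lie in K *)
Definition abelian_mod (K A : T -> Prop) : Prop :=
  forall a b, A a -> A b -> K (mul (mul (inv a) (inv b)) (mul a b)).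

(* f : T -> T is a lifting of some psi in End(G/K) with psi(G/K) <= A/K:
   f takes values in A, f induces a well-defined map on cosets gK,
   and that induced map is a homomorphism of G/K.  Conversely every
   lifting of every psi in the ring \mathcal{A} satisfies this. *)
Definition lifting_A (K A : T -> Prop) (f : T -> T) : Prop :=
  (forall g, A (f g)) /\
  (forall g h, K (mul (inv g) h) -> K (mul (inv (f g)) (f h))) /\
  (forall g h, K (mul (inv (f (mul g h))) (mul (f g) (f h)))).

Definition bilin_B (K : T -> Prop) (b : T -> T -> T) : Prop :=
  (forall g h, K (b g h)) /\
  (forall g h k, b (mul g h) k = mul (b g k) (b h k)) /\
  (forall g h k, b g (mul h k) = mul (b g h) (b g k)) /\
  (forall k g, K k -> b k g = one /\ b g k = one).

Definition circ (f : T -> T) (b : T -> T -> T) (g h : T) : T :=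
  mul (mul (mul (mul g (f g)) h) (inv (f g))) (b g h).

End Defs.

(* Main.v *)
Require Import Defs.
From Stdlib Require Import ssreflect.
Set Implicit Arguments.

Section G.
Variables (T : Type) (mul : T -> T -> T) (one : T) (inv : T -> T).
Hypothesis HG : is_group_with mul one inv.
Variables (K A : T -> Prop).
Hypothesis HK : is_subgroup mul one inv K.
Hypothesis HKc : central mul K.
Hypothesis HA : is_subgroup mul one inv A.
Hypothesis HKA : forall x, K x -> A x.
Hypothesis HAab : abelian_mod mul inv K A.

Declare Scope g_scope.
Local Notation "x * y" := (mul x y) : g_scope.
Local Notation "x ^-1" := (inv x) (at level 3, format "x ^-1") : g_scope.
Local Open Scope g_scope.

Lemma mulA x y z : x * (y * z) = x * y * z. Proof. by case: HG. Qed.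
Lemma mul1g x : one * x = x. Proof. by case: HG => _ [H _]; case: (H x). Qed.
Lemma mulg1 x : x * one = x. Proof. by case: HG => _ [H _]; case: (H x). Qed.
Lemma mulgV x : x * x^-1 = one. Proof. by case: HG => _ [_ H]; case: (H x). Qed.
Lemma mulVg x : x^-1 * x = one. Proof. by case: HG => _ [_ H]; case: (H x). Qed.
Lemma mulgK x y : x * y * y^-1 = x. Proof. by rewrite -mulA mulgV mulg1. Qed.
Lemma mulgKV x y : x * y^-1 * y = x. Proof. by rewrite -mulA mulVg mulg1. Qed.
Lemma mulKg x y : x^-1 * (x * y) = y. Proof. by rewrite mulA mulVg mul1g. Qed.
Lemma mulKVg x y : x * (x^-1 * y) = y. Proof. by rewrite mulA mulgV mul1g. Qed.
Lemma inv_uniq x y : x * y = one -> y = x^-1.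
Proof. move=> H. by rewrite -(mulKg x y) H mulg1. Qed.
Lemma invK x : (x^-1)^-1 = x.
Proof. symmetry; apply: inv_uniq; exact: mulVg. Qed.
Lemma invM x y : (x * y)^-1 = y^-1 * x^-1.
Proof. symmetry; apply: inv_uniq. by rewrite mulA mulgK mulgV. Qed.
Lemma inv1 : one^-1 = one.
Proof. symmetry; apply: inv_uniq; exact: mulg1. Qed.
Lemma mulg_cancl x y z : x * y = x * z -> y = z.
Proof. move=> H. by rewrite -(mulKg x y) H mulKg. Qed.
Lemma mulg_cancr x y z : y * x = z * x -> y = z.
Proof. move=> H. by rewrite -(mulgK y x) H mulgK. Qed.

Ltac gsimpl := repeat (rewrite ?mulA ?invM ?invK ?mulgK ?mulgKV ?mul1g ?mulg1 ?inv1 ?mulgV ?mulVg).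

Lemma K1 : K one. Proof. by case: HK. Qed.
Lemma KM x y : K x -> K y -> K (x * y). Proof. by case: HK => _ [H _]; apply H. Qed.
Lemma KV x : K x -> K (x^-1). Proof. by case: HK => _ [_ H]; apply H. Qed.
Lemma A1 : A one. Proof. by case: HA. Qed.
Lemma AM x y : A x -> A y -> A (x * y). Proof. by case: HA => _ [H _]; apply H. Qed.
Lemma AV x : A x -> A (x^-1). Proof. by case: HA => _ [_ H]; apply H. Qed.
Lemma Kc k x : K k -> k * x = x * k. Proof. move=> H; exact: HKc. Qed.

Lemma Kmove k x y : K k -> x * k * y = x * y * k.
Proof. move=> H. by rewrite -!mulA (Kc _ H). Qed.

Definition eqK x y := K (x^-1 * y).
Lemma eqK_refl x : eqK x x. Proof. rewrite /eqK mulVg; exact K1. Qed.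
Lemma eqK_sym x y : eqK x y -> eqK y x.
Proof. rewrite /eqK => H. have := KV H. by rewrite invM invK. Qed.
Lemma eqK_trans x y z : eqK x y -> eqK y z -> eqK x z.
Proof. rewrite /eqK => H1 H2. have := KM H1 H2. by rewrite -mulA mulKVg. Qed.
Lemma eqK_mull z x y : eqK x y -> eqK (z * x) (z * y).
Proof. by rewrite /eqK invM -mulA mulKg. Qed.
Lemma eqK_mulr z x y : eqK x y -> eqK (x * z) (y * z).
Proof. rewrite /eqK invM => H.
  rewrite mulA -(mulA (z^-1)) -(Kc (z^-1) H) mulgKV. done. Qed.
Lemma eqK_mul x y x' y' : eqK x x' -> eqK y y' -> eqK (x * y) (x' * y').
Proof. move=> H1 H2. apply: (eqK_trans (eqK_mulr _ H1)); exact: eqK_mull. Qed.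
Lemma eqK_inv x y : eqK x y -> eqK (x^-1) (y^-1).
Proof. move=> H. have H' := eqK_mull (x^-1) (eqK_mulr (y^-1) H).
  move: H'. rewrite mulKg mulgV mulg1. exact: eqK_sym. Qed.
Lemma eqK_K k : K k -> eqK k one.
Proof. rewrite /eqK mulg1; exact: KV. Qed.
Lemma eqK_mulK x k : K k -> eqK (x * k) x.
Proof. move=> H. rewrite -{2}(mulg1 x). apply: eqK_mull. exact: eqK_K. Qed.
Lemma eqK_def x y : eqK x y -> y = x * (x^-1 * y).
Proof. by rewrite mulKVg. Qed.

Lemma conjK a a' x : eqK a a' -> a * x * a^-1 = a' * x * a'^-1.
Proof. move=> H. rewrite (eqK_def H). move: H; rewrite /eqK. move: (a^-1 * a') => k H.
  rewrite invM (Kmove _ _ H) !mulA mulgK. done. Qed.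

Lemma Acomm a b : A a -> A b -> eqK (a * b) (b * a).
Proof. move=> Ha Hb. have := HAab Hb Ha. by rewrite /eqK invM. Qed.

Ltac isK := lazymatch goal with
 | |- K (mul _ _) => apply: KM; isK
 | |- K (inv _) => apply: KV; isK
 | |- K one => exact: K1
 | |- _ => first [assumption | match goal with H : forall u v, K _ |- _ => apply: H end]
 end.
Ltac kpush := repeat match goal with |- context [mul (mul ?X ?k) ?Y] =>
  let Hk := fresh "Hk" in assert (Hk : K k) by isK;
  tryif (assert (K Y) by isK) then fail else (rewrite (Kmove X Y Hk); clear Hk) end.


Section L.
Variables (f : T -> T) (b : T -> T -> T).
Hypothesis Hf : lifting_A mul inv K A f.
Hypothesis Hb : bilin_B mul one K b.

Lemma fA g : A (f g). Proof. by case: Hf. Qed.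
Lemma f_resp g h : eqK g h -> eqK (f g) (f h). Proof. case: Hf => _ [H _]; apply H. Qed.
Lemma f_mul g h : eqK (f (g * h)) (f g * f h). Proof. case: Hf => _ [_ H]; apply H. Qed.
Lemma f1 : eqK (f one) one.
Proof. have := f_mul one one. rewrite /eqK mulg1 mulA mulVg mul1g => H.
  rewrite /eqK mulg1; exact: KV H. Qed.
Lemma f1K : K (f one).
Proof. have := KV f1. by rewrite /eqK mulg1 invK. Qed.
Lemma fK k : K k -> eqK (f k) one.
Proof. move=> H. apply: eqK_trans f1. apply: eqK_sym; apply: f_resp.
  by rewrite /eqK inv1 mul1g. Qed.
Lemma fV g : eqK (f (g^-1)) ((f g)^-1).
Proof. rewrite /eqK -invM; apply: KV.
  have H0 := f_mul g (g^-1). rewrite mulgV in H0.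
  have H := eqK_trans (eqK_sym f1) H0.
  move: H. by rewrite /eqK inv1 mul1g. Qed.
Lemma f_conj k y z : K k -> eqK (f (y*z*y^-1*k)) (f z).
Proof. move=> Hk.
  apply: (eqK_trans (f_mul _ _)).
  have E2 := eqK_mull (f (y*z*y^-1)) (fK Hk). rewrite mulg1 in E2.
  apply: (eqK_trans E2).
  apply: (eqK_trans (f_mul _ _)).
  apply: (eqK_trans (eqK_mul (f_mul y z) (fV y))).
  have E4 := eqK_mulr ((f y)^-1) (Acomm (fA y) (fA z)). rewrite mulgK in E4.
  exact E4. Qed.
Lemma f_gen k x y z : K k -> eqK (f (x*y*z*y^-1*k)) (f x * f z).
Proof. move=> Hk. have -> : x*y*z*y^-1*k = x*(y*z*y^-1*k) by rewrite !mulA.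
  apply: (eqK_trans (f_mul _ _)). apply: eqK_mull. exact: f_conj. Qed.

Lemma bK g h : K (b g h). Proof. by case: Hb. Qed.
Lemma bMl g h k : b (g * h) k = b g k * b h k. Proof. by case: Hb => _ [H _]. Qed.
Lemma bMr g h k : b g (h * k) = b g h * b g k. Proof. by case: Hb => _ [_ [H _]]. Qed.
Lemma bKl k g : K k -> b k g = one. Proof. move=> Hk; case: Hb => _ [_ [_ H]]; by case: (H k g Hk). Qed.
Lemma bKr k g : K k -> b g k = one. Proof. move=> Hk; case: Hb => _ [_ [_ H]]; by case: (H k g Hk). Qed.
Lemma bVl g h : b (g^-1) h = (b g h)^-1.
Proof. apply: inv_uniq. by rewrite -bMl mulgV (bKl _ K1). Qed.
Lemma bVr g h : b g (h^-1) = (b g h)^-1.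
Proof. apply: inv_uniq. by rewrite -bMr mulgV (bKr _ K1). Qed.
Lemma b_genl k x y z w : K k -> b (x*y*z*y^-1*k) w = b x w * b z w.
Proof. move=> Hk. rewrite !bMl bVl (bKl _ Hk) mulg1.
  rewrite -(mulA (b x w)) (Kc _ (bK y w)) mulA mulgK. done. Qed.
Lemma b_genr k x y z w : K k -> b w (x*y*z*y^-1*k) = b w x * b w z.
Proof. move=> Hk. rewrite !bMr bVr (bKr _ Hk) mulg1.
  rewrite -(mulA (b w x)) (Kc _ (bK w y)) mulA mulgK. done. Qed.

Definition c := circ mul inv f b.
Lemma cE g h : c g h = g * f g * h * (f g)^-1 * b g h. Proof. by []. Qed.
Lemma c_conj a g h : eqK (f g) a -> c g h = g * a * h * a^-1 * b g h.
Proof. move=> H. rewrite cE -!(mulA g) (conjK h H). done. Qed.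
Lemma c1l h : c one h = h.
Proof. rewrite (c_conj _ f1) (bKl _ K1). by gsimpl. Qed.
Lemma c1r g : c g one = g.
Proof. rewrite cE (bKr _ K1). by gsimpl. Qed.
Lemma f_circ g h : eqK (f (c g h)) (f g * f h).
Proof. exact: f_gen (bK g h). Qed.
Lemma b_circl g h k : b (c g h) k = b g k * b h k.
Proof. exact: b_genl (bK g h). Qed.
Lemma b_circr g h k : b g (c h k) = b g h * b g k.
Proof. exact: b_genr (bK h k). Qed.
Lemma c_assoc g h k : c g (c h k) = c (c g h) k.
Proof. have Hbk := bK.
  rewrite (c_conj _ (f_circ g h)) b_circl cE.
  rewrite cE b_circr cE. gsimpl; kpush; gsimpl.
  by rewrite !(Kmove _ _ (Hbk h k)).
Qed.
Definition cinv g := (f g)^-1 * g^-1 * f g * b g g.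
Lemma f_cinv g : eqK (f (cinv g)) ((f g)^-1).
Proof. rewrite /cinv. rewrite -{2}(invK (f g)).
  apply: (eqK_trans (f_conj _ _ (bK g g))). exact: fV. Qed.
Lemma c_invr g : c g (cinv g) = one.
Proof. have Hbk := bK. rewrite cE /cinv !bMr !bVr (bKr _ (bK g g)).
  gsimpl; kpush; gsimpl.
  by rewrite (Kc ((b g (f g))^-1) (Hbk g g)) mulgK mulVg.
Qed.
Lemma c_invl g : c (cinv g) g = one.
Proof. have Hbk := bK. rewrite (c_conj _ (f_cinv g)) /cinv !bMl !bVl (bKl _ (bK g g)).
  gsimpl; kpush; gsimpl.
  by rewrite (Kc ((b (f g) g)^-1) (Hbk g g)) mulgK mulVg.
Qed.
Lemma c_group : is_group c.
Proof. split; first by move=> *; exact: c_assoc.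
  exists one; split; first by move=> x; split; [exact: c1l | exact: c1r].
  move=> x; exists (cinv x); split; [exact: c_invr | exact: c_invl]. Qed.
Lemma c_unit : is_unit c one.
Proof. by move=> x; split; [exact: c1l | exact: c1r]. Qed.
Lemma unit_one e : is_unit c e -> e = one.
Proof. move=> H. case: (H one) => H1 _. by rewrite -H1 c1r. Qed.
Lemma inv_unique g x : c g x = one -> x = cinv g.
Proof. move=> H. by rewrite -(c1l x) -(c_invl g) -c_assoc H c1r. Qed.
End L.

Lemma conj2 X a a' y d : eqK (a * a'^-1) d -> X * a * a'^-1 * y * a' * a^-1 = X * d * y * d^-1.
Proof. move=> H.
  have -> : X * a * a'^-1 * y * a' * a^-1 = X * ((a*a'^-1) * y * (a*a'^-1)^-1) by gsimpl.
  rewrite (conjK y H). by gsimpl. Qed.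
Lemma conj3 X a y d : eqK (a^-1*d*a) d -> X * a^-1 * d * a * y * a^-1 * d^-1 = X * d * y * d^-1 * a^-1.
Proof. move=> H.
  have -> : X * a^-1 * d * a * y * a^-1 * d^-1 = X * ((a^-1*d*a) * y * (a^-1*d*a)^-1) * a^-1 by gsimpl.
  rewrite (conjK y H). by gsimpl. Qed.
Ltac kcancel Ht := rewrite ?(Kmove _ _ Ht) ?(Kmove _ _ (KV Ht)) mulgK.
Section B.
Variables (f f2 : T -> T) (b b2 : T -> T -> T).
Hypothesis Hf : lifting_A mul inv K A f.
Hypothesis Hb : bilin_B mul one K b.
Hypothesis Hf2 : lifting_A mul inv K A f2.
Hypothesis Hb2 : bilin_B mul one K b2.

Lemma brace e g x h k : is_unit (c f b) e -> c f b g x = e -> c f b x g = e ->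
  c f2 b2 g (c f b h k) = c f b (c f b (c f2 b2 g h) x) (c f2 b2 g k).
Proof. move=> He Hgx Hxg.
  have E := unit_one Hb He. rewrite E in Hgx Hxg.
  have X := inv_unique Hf Hb Hgx. rewrite X.
  have Hbk := bK Hb. have Hbk2 := bK Hb2.
  have Eu : eqK (f (c f2 b2 g h)) (f g * f h) := f_gen Hf g (f2 g) h (bK Hb2 g h).
  have C : eqK (f g * f h * (f g)^-1) (f h).
    have := eqK_mulr ((f g)^-1) (Acomm (fA Hf g) (fA Hf h)). by rewrite mulgK.
  have Ev : eqK (f (c f b (c f2 b2 g h) (cinv f b g))) (f h).
    apply: (eqK_trans (f_circ Hf Hb _ _)).
    apply: (eqK_trans (eqK_mul Eu (f_cinv Hf Hb g))).
    exact: C.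
  rewrite (c_conj f b _ _ Ev) (b_circl f Hb).
  have Eu2 : eqK (f (c f2 b2 g h) * (f g)^-1) (f h).
    exact: eqK_trans (eqK_mulr _ Eu) C.
  rewrite /c /circ /cinv in Eu2 *.
  rewrite (b_genr Hb2 h (f h) k g (Hbk h k)).
  rewrite !(b_genl Hb g (f2 g) h _ (Hbk2 g h)).
  rewrite !(b_genr Hb g (f2 g) k _ (Hbk2 g k)).
  rewrite !(bMl Hb) !(bMr Hb) !(bVl Hb) !(bVr Hb) !(bKl Hb _ (Hbk g g)) !(bKr Hb _ (Hbk g g)).
  gsimpl; kpush; gsimpl.
  rewrite (conj2 _ _ Eu2). gsimpl.
  have D : eqK ((f2 g)^-1 * f h * f2 g) (f h).
    have := Acomm (AV (fA Hf2 g)) (AM (fA Hf h) (fA Hf2 g)). by rewrite mulA mulgK.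
  rewrite (conj3 _ _ D).
  rewrite (Kmove _ ((b g (f g))^-1) (Hbk g g)) mulgK.
  kcancel (Hbk g g). kcancel (Hbk g (f g)). kcancel (Hbk h (f g)).
  kcancel (Hbk h g). kcancel (Hbk (f g) g). kcancel (Hbk (f g) k).
  kcancel (Hbk g k).
  by rewrite !(Kmove _ _ (Hbk h k)).
Qed.
End B.

Lemma main_in (phi psi : T -> T) (beta alpha : T -> T -> T)
  (Hphi : lifting_A mul inv K A phi) (Hbeta : bilin_B mul one K beta)
  (Hpsi : lifting_A mul inv K A psi) (Halpha : bilin_B mul one K alpha) :
  is_group (circ mul inv phi beta) /\
  is_unit (circ mul inv phi beta) one /\
  (forall g,
     let x := mul (mul (mul (inv (phi g)) (inv g)) (phi g)) (beta g g) in
     circ mul inv phi beta g x = one /\ circ mul inv phi beta x g = one) /\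
  is_group (circ mul inv psi alpha) /\
  is_unit (circ mul inv psi alpha) one /\
  bi_skew_brace (circ mul inv phi beta) (circ mul inv psi alpha).
Proof.
  split; first exact: (c_group Hphi Hbeta).
  split; first exact: (c_unit Hphi Hbeta).
  split.
    move=> g; cbv zeta; split; [exact: (c_invr phi Hbeta g) | exact: (c_invl Hphi Hbeta g)].
  split; first exact: (c_group Hpsi Halpha).
  split; first exact: (c_unit Hpsi Halpha).
  split; split.
  - exact: (c_group Hphi Hbeta).
  - split; first exact: (c_group Hpsi Halpha).
    exact: (brace Hphi Hbeta Hpsi Halpha).
  - exact: (c_group Hpsi Halpha).
  - split; first exact: (c_group Hphi Hbeta).
    exact: (brace Hpsi Halpha Hphi Hbeta).
Qed.
End G.

Theorem mainTheorem1 (T : Type) (mul : T -> T -> T) (one : T) (inv : T -> T)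
  (K A : T -> Prop)
  (HG : is_group_with mul one inv)
  (HK : is_subgroup mul one inv K) (HKc : central mul K)
  (HA : is_subgroup mul one inv A) (HKA : forall x, K x -> A x)
  (HAab : abelian_mod mul inv K A)
  (phi psi : T -> T) (beta alpha : T -> T -> T)
  (Hphi : lifting_A mul inv K A phi) (Hbeta : bilin_B mul one K beta)
  (Hpsi : lifting_A mul inv K A psi) (Halpha : bilin_B mul one K alpha) :
  is_group (circ mul inv phi beta) /\
  is_unit (circ mul inv phi beta) one /\
  (forall g,
     let x := mul (mul (mul (inv (phi g)) (inv g)) (phi g)) (beta g g) in
     circ mul inv phi beta g x = one /\ circ mul inv phi beta x g = one) /\
  is_group (circ mul inv psi alpha) /\
  is_unit (circ mul inv psi alpha) one /\
  bi_skew_brace (circ mul inv phi beta) (circ mul inv psi alpha).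
Proof. exact: (main_in HG HK HKc HA HAab Hphi Hbeta Hpsi Halpha). Qed.
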